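(* Consider a mobile robot with perfectly known state $x^R$ and known deterministic discrete-time dynamics $x^R_{t+1}=f^R(x^R_t,u_t)$, navigating a static but initially unmapped environment $\mathcal{W}\subseteq\mathbb{R}^3$. The robot's onboard perception conservatively identifies free regions and adds them to a known free space $\mathcal{W}^{\text{free}}(\eta_t)\subseteq\mathcal{W}$ at each time $t$, where $\eta_t$ is the robot's information state. Fix a horizon $H\ge1$ and a braking input $u^{\text{brake}}$, used as fallback policy $\pi^{\text{shield}}(\eta)\equiv u^{\text{brake}}$. Consider the model-predictive safety filter which, given a candidate action $u$ at information state $\eta$, lets $u$ through if applying $u$ and then $u^{\text{brake}}$ for the next $H-1$ steps brings the robot to a full stop while its position remains within the currently known free space $\mathcal{W}^{\text{free}}(\eta)$, and otherwise overrides $u$ with $u^{\text{brake}}$. Then, for every task policy, this filter maintains safety (the robot never collides with an obstacle) from any deployment information state $\eta_0$ in which the robot is at rest within the initially known free space $\mathcal{W}^{\text{free}}(\eta_0)$.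
   Context: ''Conservatively identifies free regions'' means that every point of $\mathcal{W}^{\text{free}}(\eta_t)$ is truly obstacle-free, and the known free space never shrinks: $\mathcal{W}^{\text{free}}(\eta_{t+1})\supseteq\mathcal{W}^{\text{free}}(\eta_t)$. A robot at a full stop (at rest) remains at rest at the same position when $u^{\text{brake}}$ is applied. Collision means the robot's position lies outside the true obstacle-free space; in particular a position inside the known free space is collision-free. *)

(* Defs.v *)
From Stdlib Require Import Reals ClassicalDescription.
Open Scope R_scope.

Definition R3 : Type := (R * R * R)%type.
Definition region : Type := R3 -> Prop.
Definition subset (A B : region) : Prop := forall p, A p -> B p.

Fixpoint brake_iter {X U : Type} (f : X -> U -> X) (ub : U) (n : nat) (x : X) : X :=
  match n with
  | O => x
  | S n' => brake_iter f ub n' (f x ub)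
  end.

(* The k-th predicted state (k = 1..H) is brake_iter f ub (k-1) (f x u). *)
Definition mps_check {X U : Type} (f : X -> U -> X) (pos : X -> R3)
  (at_rest : X -> Prop) (ub : U) (H : nat) (K : region) (x : X) (u : U) : Prop :=
  at_rest (brake_iter f ub (H - 1) (f x u)) /\
  (forall k : nat, (1 <= k <= H)%nat -> K (pos (brake_iter f ub (k - 1) (f x u)))).

Definition mps_filter {X U : Type} (f : X -> U -> X) (pos : X -> R3)
  (at_rest : X -> Prop) (ub : U) (H : nat) (K : region) (x : X) (u : U) : U :=
  if excluded_middle_informative (mps_check f pos at_rest ub H K x u) then u else ub.

(* Main.v *)
Require Import Defs.
From Stdlib Require Import Reals ClassicalDescription.

(* X : robot states, U : inputs, I : information states.
   state eta : the (perfectly known) robot state contained in eta;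
   Wfree eta : known free space at information state eta;
   Wobsfree : the true obstacle-free part of the environment W. *)
Theorem corollary4
  (X U I : Type) (fR : X -> U -> X) (pos : X -> R3) (at_rest : X -> Prop)
  (W Wobsfree : region) (Wfree : I -> region) (state : I -> X)
  (H : nat) (ubrake : U)
  (HH : (1 <= H)%nat)
  (Hobs_W : subset Wobsfree W)
  (Hbrake_rest : forall x, at_rest x -> fR x ubrake = x)
  (pi_task : I -> U) (eta : nat -> I)
  (Hcons : forall t, subset (Wfree (eta t)) Wobsfree)
  (Hmono : forall t, subset (Wfree (eta t)) (Wfree (eta (S t))))
  (Hdyn : forall t, state (eta (S t)) =
      fR (state (eta t))
         (mps_filter fR pos at_rest ubrake H (Wfree (eta t)) (state (eta t))
                     (pi_task (eta t))))
  (Hinit_rest : at_rest (state (eta 0%nat)))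
  (Hinit_free : Wfree (eta 0%nat) (pos (state (eta 0%nat)))) :
  forall t : nat, Wobsfree (pos (state (eta t))).
Proof.
  assert (Inv : forall t, exists n, at_rest (brake_iter fR ubrake n (state (eta t))) /\
     forall k, (k <= n)%nat -> Wfree (eta t) (pos (brake_iter fR ubrake k (state (eta t))))).
  { induction t as [|t IH].
    - exists 0%nat. split; [exact Hinit_rest|].
      intros k Hk. assert (k = 0%nat) by (inversion Hk; reflexivity). subst. exact Hinit_free.
    - destruct IH as [n [Hr Hk]].
      rewrite Hdyn. unfold mps_filter.
      destruct (excluded_middle_informative _) as [Hc|Hc].
      + destruct Hc as [Hc1 Hc2]. exists (H - 1)%nat. split; [exact Hc1|].
        intros k Hk'. apply (Hmono t).
        specialize (Hc2 (S k)). simpl in Hc2. replace (k - 0)%nat with k in Hc2 by (destruct k; reflexivity).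
        apply Hc2. split; [apply le_n_S, le_0_n|]. destruct H; [inversion HH|]. simpl in Hk'.
        rewrite Nat.sub_0_r in Hk'. apply le_n_S; exact Hk'.
      + destruct n as [|n'].
        * simpl in Hr. rewrite (Hbrake_rest _ Hr). exists 0%nat. split; [exact Hr|].
          intros k Hk'. assert (k = 0%nat) by (inversion Hk'; reflexivity). subst.
          apply (Hmono t). apply (Hk 0%nat). apply le_n.
        * exists n'. split; [exact Hr|].
          intros k Hk'. apply (Hmono t). apply (Hk (S k)). apply le_n_S; exact Hk'. }
  intro t. destruct (Inv t) as [n [_ Hk]]. apply (Hcons t). apply (Hk 0%nat). apply le_0_n.
Qed.
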